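(* Let $\kappa$ be a regular cardinal, $\theta<\kappa$, and let $c:{}^{\kappa>}\omega\to\theta$ be a coloring. (1) There are $\nu^*\in{}^{\kappa>}\omega$ and $j<\theta$ such that for every $\nu\in{}^{\kappa>}\omega$ with $\nu^*\trianglelefteq\nu$ there is $\rho\in{}^{\kappa>}\omega$ with $\nu\trianglelefteq\rho$ and $c(\rho)=j$. (2) There is an embedding $h:{}^{\omega>}\omega\to{}^{\kappa>}\omega$ such that $h(\eta)^\frown\langle i\rangle\trianglelefteq h(\eta^\frown\langle i\rangle)$ for all $\eta\in{}^{\omega>}\omega$ and $i<\omega$, and the range of $h$ is monochromatic, i.e. $c(h(\eta))=c(h(\nu))$ for all $\eta,\nu\in{}^{\omega>}\omega$.
   Context: ${}^{\kappa>}\omega$ is the set of sequences of natural numbers indexed by ordinals $<\kappa$; $\trianglelefteq$ is the initial-segment order and $^\frown$ is concatenation. *)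

(* Defs.v *)
From Stdlib Require Import List.
Import ListNotations.

(* An infinite regular cardinal kappa is represented by a type K carrying a
   strict well-order [lt] whose order type is kappa: elements of K are exactly
   the ordinals < kappa. *)
Definition regular_cardinal_order {K : Type} (lt : K -> K -> Prop) : Prop :=
  (forall x y z, lt x y -> lt y z -> lt x z) /\
  (forall x, ~ lt x x) /\
  (forall x y, lt x y \/ x = y \/ lt y x) /\
  well_founded lt /\
  (exists f : nat -> K, forall m n, f m = f n -> m = n) /\
  (* a cardinal (initial ordinal): no proper initial segment has size kappa *)
  (forall (a : K) (f : K -> {b : K | lt b a}),
      ~ (forall x y, f x = f y -> x = y)) /\
  (* regular: every subset of size < kappa (image of some alpha < kappa)
     is bounded below kappa *)
  (forall (a : K) (f : {b : K | lt b a} -> K),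
      exists g : K, forall x, lt (f x) g).

(* Elements of ^{kappa>}omega: a length alpha < kappa and values for the
   positions beta < alpha (padded with 0 beyond alpha, so that equality of
   sequences is equality of the record). *)
Record kseq {K : Type} (lt : K -> K -> Prop) : Type := KSeq {
  klen : K;
  kval : K -> nat;
  kpad : forall b, ~ lt b klen -> kval b = 0
}.
Arguments klen {K lt}.
Arguments kval {K lt}.

Definition kinit {K : Type} {lt : K -> K -> Prop} (nu rho : kseq lt) : Prop :=
  (klen nu = klen rho \/ lt (klen nu) (klen rho)) /\
  (forall b, lt b (klen nu) -> kval nu b = kval rho b).

(* nu ^ <i>  ⊴  rho  (nu^<i> has length alpha+1 and value i at alpha) *)
Definition kinit_cons {K : Type} {lt : K -> K -> Prop}
    (nu : kseq lt) (i : nat) (rho : kseq lt) : Prop :=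
  lt (klen nu) (klen rho) /\
  (forall b, lt b (klen nu) -> kval nu b = kval rho b) /\
  kval rho (klen nu) = i.

(* Main.v *)
Require Import Defs.
From Stdlib Require Import List Classical ClassicalEpsilon FunctionalExtensionality ProofIrrelevance Lia Arith.
Import ListNotations.

Definition Trans {K} (lt : K -> K -> Prop) := forall x y z, lt x y -> lt y z -> lt x z.
Definition Irr {K} (lt : K -> K -> Prop) := forall x, ~ lt x x.
Definition Tri {K} (lt : K -> K -> Prop) := forall x y, lt x y \/ x = y \/ lt y x.

Lemma kseq_ext {K : Type} {lt : K -> K -> Prop} (x y : kseq lt) :
  klen x = klen y -> (forall b, kval x b = kval y b) -> x = y.
Proof.
  destruct x as [l1 v1 p1], y as [l2 v2 p2]; simpl; intros E Hv; subst l2.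
  assert (v1 = v2) by (apply functional_extensionality; auto). subst v2.
  f_equal; apply proof_irrelevance.
Qed.

Lemma kinit_refl {K} {lt : K -> K -> Prop} (x : kseq lt) : kinit x x.
Proof. split; auto. Qed.

Lemma lt_kinit {K} {lt : K -> K -> Prop} (Htr : Trans lt) (a b : kseq lt) p :
  lt p (klen a) -> kinit a b -> lt p (klen b).
Proof. intros Hp [[E|L] _]; [rewrite <- E; auto | eapply Htr; eauto]. Qed.

Lemma kinit_trans {K} {lt : K -> K -> Prop} (Htr : Trans lt) (a b c : kseq lt) :
  kinit a b -> kinit b c -> kinit a c.
Proof.
  intros H1 H2. pose proof H1 as [Hl1 Hv1]. pose proof H2 as [Hl2 Hv2]. split.
  - destruct Hl1 as [E1|L1]; destruct Hl2 as [E2|L2].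
    + left; congruence.
    + right; rewrite E1; auto.
    + right; rewrite <- E2; auto.
    + right; eapply Htr; eauto.
  - intros p Hp. rewrite Hv1 by auto. apply Hv2. eapply lt_kinit; eauto.
Qed.

Lemma kinit_len {K} {lt : K -> K -> Prop} (a b : kseq lt) :
  kinit a b -> klen a = klen b \/ lt (klen a) (klen b).
Proof. intros [H _]; exact H. Qed.

Lemma kinit_common {K} {lt : K -> K -> Prop} (Htr : Trans lt) (a b x : kseq lt) :
  kinit a x -> kinit b x -> (klen a = klen b \/ lt (klen a) (klen b)) -> kinit a b.
Proof.
  intros Ha Hb Hl. split; auto. intros p Hp.
  rewrite (proj2 Ha p Hp). symmetry; apply (proj2 Hb).
  destruct Hl as [E|L]; [rewrite <- E; auto | eapply Htr; eauto].
Qed.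

Lemma kinit_common_eq {K} {lt : K -> K -> Prop} (a b x : kseq lt) :
  kinit a x -> kinit b x -> klen a = klen b -> a = b.
Proof.
  intros Ha Hb E. apply kseq_ext; auto. intro p.
  destruct (classic (lt p (klen a))) as [H|H].
  - rewrite (proj2 Ha p H). symmetry; apply (proj2 Hb). rewrite <- E; auto.
  - rewrite (@kpad _ _ a p H). rewrite E in H. rewrite (@kpad _ _ b p H). reflexivity.
Qed.

Lemma lt_le_false {K} {lt : K -> K -> Prop} (Htr : Trans lt) (Hir : Irr lt) a b :
  lt a b -> (b = a \/ lt b a) -> False.
Proof. intros H [E|H']; [subst; eapply Hir; eauto | eapply Hir; eapply Htr; eauto]. Qed.

Definition glue {K} {lt : K -> K -> Prop} (Htr : Trans lt) {I : Type} (R : I -> kseq lt) (g : K)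
  (Hg : forall x, lt (klen (R x)) g) : kseq lt.
Proof.
  refine (@KSeq K lt g (fun p => match excluded_middle_informative (exists x, lt p (klen (R x))) with
     | left E => kval (R (proj1_sig (constructive_indefinite_description _ E))) p
     | right _ => 0 end) _).
  intros p Hp. destruct (excluded_middle_informative _) as [E|E]; [|reflexivity].
  exfalso. destruct E as [x Hx]. apply Hp. eapply Htr; eauto.
Defined.

Lemma glue_ext {K} {lt : K -> K -> Prop} (Htr : Trans lt) {I : Type} (R : I -> kseq lt) (g : K)
  (Hg : forall x, lt (klen (R x)) g) :
  (forall x y, kinit (R x) (R y) \/ kinit (R y) (R x)) -> forall x, kinit (R x) (glue Htr R g Hg).
Proof.
  intros Hcomp x. split.
  - simpl. right; apply Hg.
  - intros p Hp. simpl. destruct (excluded_middle_informative _) as [E|E].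
    + destruct (constructive_indefinite_description _ E) as [y Hy]. simpl.
      destruct (Hcomp x y) as [Hxy|Hyx]; [apply Hxy; auto | symmetry; apply Hyx; auto].
    + exfalso; apply E; eauto.
Qed.

Definition kcons {K} {lt : K -> K -> Prop} (Htr : Trans lt) (succ : forall a : K, {g | lt a g})
  (nu : kseq lt) (i : nat) : kseq lt.
Proof.
  refine (@KSeq K lt (proj1_sig (succ (klen nu)))
    (fun p => if excluded_middle_informative (lt p (klen nu)) then kval nu p
              else if excluded_middle_informative (p = klen nu) then i else 0) _).
  intros p Hp. destruct (succ (klen nu)) as [g Hg]; simpl in Hp.
  destruct (excluded_middle_informative (lt p (klen nu))) as [H1|H1].
  - exfalso; apply Hp; eapply Htr; eauto.
  - destruct (excluded_middle_informative (p = klen nu)) as [H2|H2]; [|reflexivity].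
    exfalso; apply Hp; subst; auto.
Defined.

Lemma kcons_cons {K} {lt : K -> K -> Prop} (Htr : Trans lt) (Hir : Irr lt)
  (succ : forall a : K, {g | lt a g}) (x : kseq lt) i y :
  kinit (kcons Htr succ x i) y -> kinit_cons x i y.
Proof.
  intros H.
  assert (L : lt (klen x) (klen (kcons Htr succ x i))).
  { unfold kcons; simpl. destruct (succ (klen x)); simpl; auto. }
  split; [|split].
  - eapply lt_kinit; eauto.
  - intros p Hp. rewrite <- (proj2 H p) by (eapply Htr; eauto).
    unfold kcons; simpl. destruct (excluded_middle_informative (lt p (klen x))); [reflexivity|contradiction].
  - rewrite <- (proj2 H _ L). unfold kcons; simpl.
    destruct (excluded_middle_informative (lt (klen x) (klen x))) as [A|A]; [exfalso; eapply Hir; eauto|].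
    destruct (excluded_middle_informative (klen x = klen x)) as [B|B]; [reflexivity| congruence].
Qed.

Lemma kcons_init {K} {lt : K -> K -> Prop} (Htr : Trans lt) (Hir : Irr lt)
  (succ : forall a : K, {g | lt a g}) (x : kseq lt) i : kinit x (kcons Htr succ x i).
Proof.
  pose proof (kcons_cons Htr Hir succ x i _ (kinit_refl _)) as [A [B _]]. split; auto.
Qed.

Lemma unbounded {K} (lt : K -> K -> Prop) (Hk : regular_cardinal_order lt) : forall a, exists g, lt a g.
Proof.
  destruct Hk as [Htr [Hir [Htri [Hwf [[e He] [Hcard Hreg]]]]]].
  intros a. destruct (classic (exists b, lt b a)) as [[b Hb]|Hn].
  - destruct (Hreg a (fun _ => a)) as [g Hg]. exists g. exact (Hg (exist _ b Hb)).
  - assert (Hx : exists x, x <> a).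
    { destruct (classic (e 0 = a)) as [E|E]; [exists (e 1) | exists (e 0); auto].
      intro E1. rewrite <- E in E1. apply He in E1. discriminate. }
    destruct Hx as [x Hx]. exists x.
    destruct (Htri a x) as [H|[H|H]]; auto; [congruence| exfalso; apply Hn; eauto].
Qed.

Lemma part1 (K : Type) (lt : K -> K -> Prop) (Hk : regular_cardinal_order lt)
  (theta : K) (c : kseq lt -> K) (Hc : forall rho, lt (c rho) theta) :
  exists (nustar : kseq lt) (j : K), lt j theta /\
     forall nu, kinit nustar nu -> exists rho, kinit nu rho /\ c rho = j.
Proof.
  destruct Hk as [Htr [Hir [Htri [Hwf [_ [_ Hreg]]]]]].
  apply NNPP; intro Hneg.
  assert (Hnext : forall (nu : kseq lt) (a : K),
    {nu' | kinit nu nu' /\ (lt a theta -> forall rho, kinit nu' rho -> c rho <> a)}).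
  { intros nu a. apply constructive_indefinite_description.
    destruct (classic (lt a theta)) as [Ha|Ha].
    - apply NNPP; intro Hn. apply Hneg. exists nu, a. split; auto.
      intros nu0 H0. apply NNPP; intro Hn2. apply Hn. exists nu0. split; auto.
      intros _ rho Hr Hcr. apply Hn2. exists rho; auto.
    - exists nu. split; [apply kinit_refl | intro; contradiction]. }
  assert (Hreg' : forall a (f : {b | lt b a} -> K), {g | forall x, lt (f x) g}).
  { intros a f. apply constructive_indefinite_description. apply Hreg. }
  set (F := fun (a : K) (rec : forall b, lt b a -> kseq lt) =>
     let R := fun x : {b | lt b a} => rec (proj1_sig x) (proj2_sig x) in
     let gs := Hreg' a (fun x => klen (R x)) in
     proj1_sig (Hnext (glue Htr R (proj1_sig gs) (proj2_sig gs)) a)).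
  set (nu := Fix Hwf (fun _ => kseq lt) F).
  assert (Hnu : forall a, nu a = F a (fun y _ => nu y)).
  { intro a. unfold nu. refine (Fix_eq Hwf (fun _ => kseq lt) F _ a). intros x f g Hfg.
    assert (f = g) by (apply functional_extensionality_dep; intro y;
                       apply functional_extensionality_dep; intro p; apply Hfg).
    subst; reflexivity. }
  assert (Hchain : forall a b, lt b a -> kinit (nu b) (nu a)).
  { intro a. induction a as [a IH] using (well_founded_ind Hwf).
    intros b Hb. rewrite (Hnu a). unfold F; cbv beta zeta.
    match goal with |- context [proj1_sig (Hnext ?g a)] => pose proof (proj1 (proj2_sig (Hnext g a))) as Hin end.
    eapply kinit_trans; [exact Htr | | exact Hin].
    refine (glue_ext Htr _ _ _ _ (exist _ b Hb)).
    intros [x1 H1] [y1 H2]; simpl.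
    destruct (Htri x1 y1) as [L|[E|L]];
      [left; apply IH; auto | subst; left; apply kinit_refl | right; apply IH; auto]. }
  assert (Havoid : forall a, lt a theta -> forall rho, kinit (nu a) rho -> c rho <> a).
  { intros a Ha. rewrite (Hnu a). unfold F; cbv beta zeta.
    match goal with |- context [proj1_sig (Hnext ?g a)] => pose proof (proj2 (proj2_sig (Hnext g a))) as Hav end.
    auto. }
  apply (Havoid (c (nu theta)) (Hc _) (nu theta)); [apply Hchain; apply Hc | reflexivity].
Qed.

Lemma kinit_cons_init {K} {lt : K -> K -> Prop} (a b : kseq lt) i : kinit_cons a i b -> kinit a b.
Proof. intros [H1 [H2 _]]; split; auto. Qed.

Lemma mono {K} {lt : K -> K -> Prop} (Htr : Trans lt) (Hf : list nat -> kseq lt)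
  (HC : forall m i, kinit_cons (Hf m) i (Hf (i :: m))) :
  forall p l, kinit (Hf l) (Hf (p ++ l)).
Proof.
  induction p as [|k p IH]; intros l; simpl; [apply kinit_refl|].
  eapply kinit_trans; [exact Htr | apply IH | eapply kinit_cons_init; apply HC].
Qed.

Lemma suffix_antisym (l l' p q : list nat) : l' = p ++ l -> l = q ++ l' -> l = l'.
Proof.
  intros E1 E2. subst l'. rewrite app_assoc in E2.
  assert (length (q ++ p) = 0).
  { apply (f_equal (@length nat)) in E2. rewrite length_app in E2. lia. }
  destruct (q ++ p) eqn:Eqp; [|discriminate].
  apply app_eq_nil in Eqp as [-> ->]. reflexivity.
Qed.

Lemma suffix_lemma {K} {lt : K -> K -> Prop} (Htr : Trans lt) (Hir : Irr lt) (Htri : Tri lt)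
  (Hf : list nat -> kseq lt) (HC : forall m i, kinit_cons (Hf m) i (Hf (i :: m))) :
  forall n l l', length l + length l' <= n -> kinit (Hf l) (Hf l') -> exists p, l' = p ++ l.
Proof.
  induction n as [|n IHn]; intros l l' Hlen Hinit.
  - destruct l; [exists l'; rewrite app_nil_r; reflexivity| simpl in Hlen; lia].
  - destruct l as [|i m]; [exists l'; rewrite app_nil_r; reflexivity|].
    destruct l' as [|k m'].
    + exfalso.
      pose proof (mono Htr Hf HC m []) as H0. rewrite app_nil_r in H0.
      destruct (HC m i) as [L _].
      apply (lt_le_false Htr Hir (klen (Hf m)) (klen (Hf (i::m))) L).
      apply kinit_len. eapply kinit_trans; [exact Htr | exact Hinit | exact H0].
    + simpl in Hlen.
      pose proof (HC m i) as [Lm [Vm Im]].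
      pose proof (HC m' k) as [Lm' [Vm' Km']].
      assert (HmX : kinit (Hf m) (Hf (k :: m'))) by
        (eapply kinit_trans; [exact Htr | eapply kinit_cons_init; apply (HC m i) | exact Hinit]).
      assert (Hm'X : kinit (Hf m') (Hf (k :: m'))) by (eapply kinit_cons_init; apply (HC m' k)).
      destruct (Htri (klen (Hf m)) (klen (Hf m'))) as [Lt|[Eq|Gt]].
      * destruct (Htri (klen (Hf (i::m))) (klen (Hf m'))) as [L2|[E2|L2]].
        -- destruct (IHn (i::m) m') as [p Ep]; [simpl; lia| |].
           { eapply kinit_common; [exact Htr| exact Hinit | exact Hm'X | right; exact L2]. }
           exists (k :: p); subst; reflexivity.
        -- destruct (IHn (i::m) m') as [p Ep]; [simpl; lia| |].
           { eapply kinit_common; [exact Htr| exact Hinit | exact Hm'X | left; exact E2]. }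
           exists (k :: p); subst; reflexivity.
        -- destruct (IHn m' (i::m)) as [p Ep]; [simpl; lia| |].
           { eapply kinit_common; [exact Htr| exact Hm'X | exact Hinit | right; exact L2]. }
           exfalso. destruct p as [|q p'].
           ++ simpl in Ep. rewrite <- Ep in L2. eapply Hir; eauto.
           ++ simpl in Ep. injection Ep as _ Ep.
              pose proof (mono Htr Hf HC p' m') as H3. rewrite <- Ep in H3.
              apply (lt_le_false Htr Hir _ _ Lt). apply kinit_len; exact H3.
      * assert (Hmm' : Hf m = Hf m') by (eapply kinit_common_eq; eauto).
        destruct (IHn m m') as [p Ep]; [lia| rewrite Hmm'; apply kinit_refl|].
        destruct (IHn m' m) as [q Eq']; [lia| rewrite Hmm'; apply kinit_refl|].
        pose proof (suffix_antisym _ _ _ _ Ep Eq') as Emm. rewrite <- Emm in *.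
        assert (i = k).
        { rewrite <- Im, <- Km'. apply (proj2 Hinit). exact Lm. }
        subst k. exists []; reflexivity.
      * destruct (IHn m' m) as [p Ep]; [lia| |].
        { eapply kinit_common; [exact Htr| exact Hm'X | exact HmX | right; exact Gt]. }
        exfalso. destruct p as [|q p'].
        -- simpl in Ep. rewrite Ep in Gt. eapply Hir; eauto.
        -- destruct (exists_last (l:=q::p') ltac:(discriminate)) as [p0 [k0 Ep0]].
           rewrite Ep0, <- app_assoc in Ep. simpl in Ep.
           pose proof (mono Htr Hf HC p0 (k0 :: m')) as H3. rewrite <- Ep in H3.
           pose proof (HC m' k0) as [Lk0 [_ Kk0]].
           assert (Hq : kval (Hf m) (klen (Hf m')) = k0).
           { rewrite <- Kk0. symmetry. apply (proj2 H3). exact Lk0. }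
           assert (Hq2 : kval (Hf (k :: m')) (klen (Hf m')) = k0).
           { rewrite <- Hq, (Vm _ Gt). symmetry. apply (proj2 Hinit). exact (Htr _ _ _ Gt Lm). }
           assert (Ek : k0 = k) by congruence. rewrite Ek in H3.
           apply (lt_le_false Htr Hir (klen (Hf m)) (klen (Hf (k :: m')))).
           ++ destruct (kinit_len _ _ Hinit) as [E|L]; [rewrite <- E; auto | eapply Htr; eauto].
           ++ apply kinit_len; exact H3.
Qed.

Fixpoint build {A : Type} (P : A -> Prop) (start : {x | P x})
  (step : forall x, P x -> nat -> {y | P y}) (l : list nat) : {x | P x} :=
  match l with
  | [] => start
  | i :: m => let r := build P start step m in step (proj1_sig r) (proj2_sig r) i
  end.

Theorem lemma2p13 (K : Type) (lt : K -> K -> Prop)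
  (Hk : regular_cardinal_order lt)
  (theta : K) (c : kseq lt -> K) (Hc : forall rho, lt (c rho) theta) :
  (exists (nustar : kseq lt) (j : K), lt j theta /\
     forall nu, kinit nustar nu -> exists rho, kinit nu rho /\ c rho = j) /\
  (exists h : list nat -> kseq lt,
     (forall eta nu, h eta = h nu -> eta = nu) /\
     (forall eta (i : nat), kinit_cons (h eta) i (h (eta ++ [i]))) /\
     (forall eta nu, c (h eta) = c (h nu))).
Proof.
  pose proof (part1 K lt Hk theta c Hc) as P1.
  split; [exact P1|].
  destruct P1 as [nustar [j [Hj H1]]].
  pose proof Hk as Hk'.
  destruct Hk' as [Htr [Hir [Htri [Hwf _]]]].
  assert (succ : forall a : K, {g | lt a g}).
  { intro a; apply constructive_indefinite_description; apply (unbounded lt Hk). }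
  set (P := fun x => kinit nustar x /\ c x = j).
  assert (start : {x | P x}).
  { apply constructive_indefinite_description.
    destruct (H1 nustar (kinit_refl _)) as [rho [Hr Hcr]]. exists rho; split; auto. }
  assert (step : forall x, P x -> forall i, {y | P y /\ kinit (kcons Htr succ x i) y}).
  { intros x [Px Cx] i. apply constructive_indefinite_description.
    assert (Hx : kinit nustar (kcons Htr succ x i)).
    { eapply kinit_trans; [exact Htr | exact Px | apply kcons_init; exact Hir]. }
    destruct (H1 _ Hx) as [rho [Hr Hcr]]. exists rho. split; [split|]; auto.
    eapply kinit_trans; [exact Htr | exact Hx | exact Hr]. }
  set (step' := fun x px i => exist P (proj1_sig (step x px i)) (proj1 (proj2_sig (step x px i)))).
  set (Hf := fun l => proj1_sig (build P start step' l)).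
  assert (Key : forall m i, kinit_cons (Hf m) i (Hf (i :: m))).
  { intros m i. unfold Hf. simpl. unfold step'. simpl.
    match goal with |- context [proj1_sig (step ?x ?px i)] => pose proof (proj2 (proj2_sig (step x px i))) as Hy end.
    eapply kcons_cons; eauto. }
  assert (Hcol : forall l, c (Hf l) = j).
  { intro l. unfold Hf. exact (proj2 (proj2_sig (build P start step' l))). }
  clearbody Hf.
  assert (Hinj : forall l l', Hf l = Hf l' -> l = l').
  { intros l l' E.
    destruct (suffix_lemma Htr Hir Htri Hf Key _ l l' (le_n _)) as [p Ep];
      [rewrite E; apply kinit_refl|].
    destruct (suffix_lemma Htr Hir Htri Hf Key _ l' l (le_n _)) as [q Eq];
      [rewrite E; apply kinit_refl|].
    exact (suffix_antisym _ _ _ _ Ep Eq). }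
  exists (fun eta => Hf (rev eta)). split; [|split].
  - intros eta nu E. apply Hinj in E.
    rewrite <- (rev_involutive eta), <- (rev_involutive nu), E. reflexivity.
  - intros eta i. cbv beta. rewrite rev_unit. apply Key.
  - intros eta nu. cbv beta. rewrite !Hcol. reflexivity.
Qed.
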